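(* Let $\tilde f>0$, $\tilde\vartheta>0$ satisfy $\tilde f/\tilde\vartheta>D/V$, and define $\tilde\sigma(\mathbf{x})=\mathbb{I}(\rho(\mathbf{x})>0)\,\tilde f+\frac{\tilde f}{\xi\tilde\vartheta}\theta(\mathbf{x})$ and $\tilde\pi(\mathbf{x})=-(f(\mathbf{x})+\tilde\sigma(\mathbf{x}))$. For all $\mathbf{x}_1,\mathbf{x}_2\in S$, with $y=f(\mathbf{x}_1)-f(\mathbf{x}_2)$ and $z=\theta(\mathbf{x}_1)-\theta(\mathbf{x}_2)$: (i) if one of (A1)–(A4) holds, then $\tilde\pi(\mathbf{x}_1)>\tilde\pi(\mathbf{x}_2)$; (ii) if one of (B1)–(B4) holds, then $\tilde\pi(\mathbf{x}_1)<\tilde\pi(\mathbf{x}_2)$. Here (A1) $-2V\le z<-V$; (A2) $-V\le z<-\xi V$; (A3) $-\xi V\le z<-\xi\eta V$ and $-D\le y\le\eta D$; (A4) $-\xi\eta V\le z\le0$, $-D\le y\le0$, $(y,z)\ne(0,0)$; (B1) $V<z\le2V$; (B2) $\xi V<z\le V$; (B3) $\xi\eta V<z\le\xi V$ and $-\eta D\le y\le D$; (B4) $0\le z\le\xi\eta V$, $0\le y\le D$, $(y,z)\ne(0,0)$.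
   Context: Let $S\subset\mathbb{R}^k$ be a compact box, $f,g_1,\dots,g_m,h_{m+1},\dots,h_n:S\to\mathbb{R}$ continuous, $\delta>0$. Put $v_i(\mathbf{x})=\max\{g_i(\mathbf{x}),0\}$ ($i\le m$), $v_i(\mathbf{x})=\max\{|h_i(\mathbf{x})|-\delta,0\}$ ($m<i\le n$), $\vartheta(\mathbf{x})=\sum_{i=1}^n v_i(\mathbf{x})$; $\mathbf{x}$ is feasible iff $\vartheta(\mathbf{x})=0$. Let $D=\max_S f-\min_S f$ and $V=\max_S\vartheta$, and assume $D>0$, $V>0$. Define $\theta(\mathbf{x})=-V$ if $\vartheta(\mathbf{x})=0$ and $\theta(\mathbf{x})=\vartheta(\mathbf{x})$ otherwise. Let $\rho(\mathbf{x})=\#\{i: v_i(\mathbf{x})>0\}$ and $\mathbb{I}(\rho(\mathbf{x})>0)$ be $1$ if $\rho(\mathbf{x})>0$ and $0$ otherwise. Fix parameters $0<\eta<1$ and $0<\xi\le 1$. *)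

(* Defs.v *)
From HB Require Import structures.
From mathcomp Require Import all_boot all_order all_algebra.
From mathcomp Require Import all_classical all_reals all_analysis.
Set Implicit Arguments. Unset Strict Implicit. Unset Printing Implicit Defensive.
Import Order.TTheory GRing.Theory Num.Theory.
Import numFieldNormedType.Exports.
Local Open Scope classical_set_scope.
Local Open Scope ring_scope.

Section Defs.
Variable R : realType.
Variable k : nat.

Definition box (a b : 'rV[R]_k) : set 'rV[R]_k :=
  [set x | forall i : 'I_k, a ord0 i <= x ord0 i <= b ord0 i].

Definition is_max_on (S : set 'rV[R]_k) (F : 'rV[R]_k -> R) (M : R) :=
  (exists2 x, S x & F x = M) /\ (forall x, S x -> F x <= M).
Definition is_min_on (S : set 'rV[R]_k) (F : 'rV[R]_k -> R) (M : R) :=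
  (exists2 x, S x & F x = M) /\ (forall x, S x -> M <= F x).

Variables (m p : nat).
(* inequality constraints g_1..g_m, equality constraints h_{m+1}..h_{m+p} (n = m+p) *)
Variable g : 'I_m -> 'rV[R]_k -> R.
Variable h : 'I_p -> 'rV[R]_k -> R.
Variable delta : R.

Definition vg (i : 'I_m) (x : 'rV[R]_k) : R := Num.max (g i x) 0.
Definition vh (j : 'I_p) (x : 'rV[R]_k) : R := Num.max (`|h j x| - delta) 0.

Definition viol (x : 'rV[R]_k) : R :=
  \sum_(i < m) vg i x + \sum_(j < p) vh j x.

Definition rho (x : 'rV[R]_k) : nat :=
  #|[set i : 'I_m | 0 < vg i x]| + #|[set j : 'I_p | 0 < vh j x]|.

Definition theta (V : R) (x : 'rV[R]_k) : R :=
  if viol x == 0 then - V else viol x.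

Definition ind_rho (x : 'rV[R]_k) : R := if (0 < rho x)%N then 1 else 0.

Definition sigma_t (V ft vt xi : R) (x : 'rV[R]_k) : R :=
  ind_rho x * ft + ft / (xi * vt) * theta V x.

Definition pi_t (f : 'rV[R]_k -> R) (V ft vt xi : R) (x : 'rV[R]_k) : R :=
  - (f x + sigma_t V ft vt xi x).
End Defs.

(* Main.v *)
Require Import Defs.
From HB Require Import structures.
From mathcomp Require Import all_boot all_order all_algebra.
From mathcomp Require Import all_classical all_reals all_analysis.
From mathcomp Require Import ring lra.
Import Order.TTheory GRing.Theory Num.Theory.
Import numFieldNormedType.Exports.
Local Open Scope classical_set_scope.
Local Open Scope ring_scope.
Section S.
Variables (R : realType) (k m p : nat) (g : 'I_m -> 'rV[R]_k -> R) (h : 'I_p -> 'rV[R]_k -> R) (delta : R).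
Lemma vg_ge0 i x : 0 <= vg g i x. Proof. by rewrite /vg le_max lexx orbT. Qed.
Lemma vh_ge0 i x : 0 <= vh h delta i x. Proof. by rewrite /vh le_max lexx orbT. Qed.
Lemma viol_ge0 x : 0 <= viol g h delta x.
Proof. by rewrite /viol addr_ge0 // sumr_ge0 // => i _; [apply: vg_ge0|apply: vh_ge0]. Qed.
Lemma rho_pos x : (0 < rho g h delta x)%N = (viol g h delta x != 0).
Proof.
rewrite /rho /viol addn_gt0.
set A := (X in (0 < X)%N || _); set B := (X in _ || (0 < X)%N).
have H1 : 0 <= \sum_(i < m) vg g i x by apply: sumr_ge0 => i _; apply: vg_ge0.
have H2 : 0 <= \sum_(i < p) vh h delta i x by apply: sumr_ge0 => i _; apply: vh_ge0.
case: (ltnP 0 A) => [hA|hA].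
  rewrite /=; apply/esym; rewrite lt0r_neq0 //.
  case/card_gt0P: hA => i hi.
  rewrite (bigD1 i) //=.
  have : 0 <= \sum_(j < m | j != i) vg g j x by apply: sumr_ge0 => j _; apply: vg_ge0.
  move: hi; rewrite /in_set => /asboolP /= hi. lra.
case: (ltnP 0 B) => [hB|hB].
  rewrite orbT; apply/esym; rewrite lt0r_neq0 //.
  case/card_gt0P: hB => i hi.
  rewrite [X in _ + X](bigD1 i) //=.
  have : 0 <= \sum_(j < p | j != i) vh h delta j x by apply: sumr_ge0 => j _; apply: vh_ge0.
  move: hi; rewrite /in_set => /asboolP /= hi. lra.
rewrite /=.
apply/esym/negbTE; rewrite negbK.
move: hA hB; rewrite !leqn0 => /eqP/card0_eq hA /eqP/card0_eq hB.
rewrite big1 ?big1 ?addr0 ?eqxx //.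
  move=> i _; apply/eqP; rewrite eq_le vh_ge0 andbT leNgt; apply/negP => hi.
  by have := hB i; rewrite /in_mem /= => /negbT/negP; apply; apply/asboolP.
move=> i _; apply/eqP; rewrite eq_le vg_ge0 andbT leNgt; apply/negP => hi.
by have := hA i; rewrite /in_mem /= => /negbT/negP; apply; apply/asboolP.
Qed.
End S.
Theorem mainTheorem8 (R : realType) (k : nat) (a b : 'rV[R]_k)
  (hab : forall i : 'I_k, a ord0 i <= b ord0 i)
  (m p : nat) (f : 'rV[R]_k -> R) (g : 'I_m -> 'rV[R]_k -> R)
  (h : 'I_p -> 'rV[R]_k -> R) (delta : R) (hdelta : 0 < delta)
  (hf : {within box a b, continuous f})
  (hg : forall i, {within box a b, continuous (g i)})
  (hh : forall j, {within box a b, continuous (h j)})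
  (D V : R)
  (HD : exists Mf mf, is_max_on (box a b) f Mf /\ is_min_on (box a b) f mf /\ D = Mf - mf)
  (HV : is_max_on (box a b) (viol g h delta) V)
  (HDpos : 0 < D) (HVpos : 0 < V)
  (eta xi : R) (heta : 0 < eta < 1) (hxi : 0 < xi <= 1)
  (ft vt : R) (hft : 0 < ft) (hvt : 0 < vt) (hratio : D / V < ft / vt) :
  forall x1 x2 : 'rV[R]_k, box a b x1 -> box a b x2 ->
  let th := theta g h delta V in
  let pit := pi_t g h delta f V ft vt xi in
  let y := f x1 - f x2 in
  let z := th x1 - th x2 in
  ((  (- (2 * V) <= z < - V)
   \/ (- V <= z < - (xi * V))
   \/ ((- (xi * V) <= z < - (xi * eta * V)) /\ (- D <= y <= eta * D))
   \/ ((- (xi * eta * V) <= z <= 0) /\ (- D <= y <= 0) /\ (y, z) <> (0, 0)))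
   -> pit x1 > pit x2)
  /\
  ((  (V < z <= 2 * V)
   \/ (xi * V < z <= V)
   \/ ((xi * eta * V < z <= xi * V) /\ (- (eta * D) <= y <= D))
   \/ ((0 <= z <= xi * eta * V) /\ (0 <= y <= D) /\ (y, z) <> (0, 0)))
   -> pit x1 < pit x2).

Proof.
move=> x1 x2 hx1 hx2 th pit y z.
have [[x0 _ _] hVmax] := HV.
have [Mf [mf [[_ hM] [[_ hm] hD]]]] := HD.
have hy1 : y <= D by rewrite /y hD; have := hM _ hx1; have := hm _ hx2; lra.
have hy2 : - D <= y by rewrite /y hD; have := hM _ hx2; have := hm _ hx1; lra.
set c := ft / (xi * vt).
have hc : 0 < c by rewrite /c divr_gt0 // mulr_gt0 //; case/andP: hxi.
have hcV : D < c * (xi * V).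
  have -> : c * (xi * V) = ft / vt * V.
    by rewrite /c; field; rewrite !lt0r_neq0 //; case/andP: hxi.
  rewrite -(ltr_pM2r HVpos) in hratio.
  by rewrite divfK ?lt0r_neq0 // in hratio.
have cls : forall x, box a b x -> (th x = - V /\ ind_rho g h delta x = 0) \/
    (0 < th x <= V /\ ind_rho g h delta x = 1).
  move=> x hx; rewrite /th /theta /ind_rho rho_pos.
  case: eqP => [_|/eqP hn]; [by left|right; split=> //].
  by rewrite lt0r hn viol_ge0 /= hVmax.
have hpit : forall x, pit x = - (f x + (ind_rho g h delta x * ft + c * th x)) by [].
rewrite !hpit /z /y; rewrite /y in hy1 hy2.
move: (cls _ hx1) (cls _ hx2) hy1 hy2.
move: (th x1) (th x2) (f x1) (f x2) (ind_rho g h delta x1) (ind_rho g h delta x2) => t1 t2 f1 f2 i1 i2 C1 C2 hy1 hy2.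
move: C1 C2.
case/andP: heta => he0 he1; case/andP: hxi => hx0 hx1'.
have hq1 : 0 < xi * eta * V by rewrite !mulr_gt0.
have hq2 : xi * eta * V < xi * V by rewrite ltr_pM2r // -[X in _ < X]mulr1 ltr_pM2l.
have hq3 : xi * V <= V by rewrite -[X in _ <= X]mul1r ler_pM2r.
have hq4 : 0 < xi * V by rewrite mulr_gt0.
have pair_ne : forall u v : R, (u, v) <> (0, 0) -> u != 0 \/ v != 0.
  move=> u v H; case: (eqVneq u 0) => [eu|]; last by left.
  by right; apply/eqP => ev; apply: H; rewrite eu ev.
move=> [[-> ->]|[/andP[ht1 ht1'] ->]] [[-> ->]|[/andP[ht2 ht2'] ->]]; split;
 (case=> [/andP[Hz1 Hz2]|[/andP[Hz1 Hz2]|[[/andP[Hz1 Hz2] /andP[Hy1 Hy2]]|[/andP[Hz1 Hz2] [/andP[Hy1 Hy2] /pair_ne Hne]]]]]).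
all: nra.
Qed.
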